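(* Let $T$ be a tree on $n\ge2$ vertices, $k\ge2$ even, and $M$ the order-$k$ Steiner distance hypermatrix of $T$. For all $\mathbf{c}_1,\ldots,\mathbf{c}_k\in\mathcal{H}_n$, $$M(\mathbf{c}_1,\ldots,\mathbf{c}_k)=(-2\,\mathbb{I}^k_{n-1})(P_T\mathbf{c}_1,\ldots,P_T\mathbf{c}_k)=-2\sum_{e\in E(T)}\prod_{j=1}^k (\mathbf{a}'^T_e\mathbf{c}_j).$$
   Context: $T$ is a tree with vertex set $\{1,\dots,n\}$ and edge set $E(T)$. For $U\subseteq V(T)$, the Steiner distance $S(U)$ is the minimum number of edges of a connected subgraph of $T$ whose vertex set contains $U$. The order-$k$ Steiner distance hypermatrix $M$ has entries $M_{(i_1,\dots,i_k)}=S(\{i_1,\dots,i_k\})$, and for any order-$k$ hypermatrix $H$ of dimension $m$, $H(\mathbf{x}_1,\dots,\mathbf{x}_k)=\sum_{\mathbf{i}\in [m]^k}H_{\mathbf{i}}\prod_{j=1}^k x_{j i_j}$. For an edge $e$, $A(e)$, $B(e)$ are the vertex sets of the two components of $T-e$, $\mathbf{a}_e$ is the indicator vector of $A(e)$, $\mathbb{J}$ is the all-ones vector, $\mathbf{a}'_e=\mathbf{a}_e-\frac{|A(e)|}{n}\mathbb{J}$, and $P_T$ is the $(n-1)\times n$ matrix with rows indexed by $E(T)$ whose row $e$ is $\mathbf{a}'^T_e$. $\mathcal{H}_n=\{\mathbf{c}\in\mathbb{R}^n:\mathbf{c}^T\mathbb{J}=0\}$. $\mathbb{I}^k_{m}$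 is the order-$k$, dimension-$m$ identity hypermatrix: its $(i_1,\dots,i_k)$ entry is $1$ if $i_1=\dots=i_k$ and $0$ otherwise. *)

(* Defs.v *)
From HB Require Import structures.
From mathcomp Require Import all_boot all_order all_algebra.
Set Implicit Arguments. Unset Strict Implicit. Unset Printing Implicit Defensive.
Import Order.TTheory GRing.Theory Num.Theory.
Local Open Scope ring_scope.

(* Graphs on vertex set 'I_n = {0,...,n-1}; an edge is a 2-element vertex set. *)
Section Defs.
Variable n : nat.

Definition adj (E : {set {set 'I_n}}) : rel 'I_n :=
  fun x y => (x != y) && ([set x; y] \in E).

Definition is_tree (E : {set {set 'I_n}}) : Prop :=
  [/\ forall e, e \in E -> #|e| = 2%N,
      forall x y : 'I_n, connect (adj E) x y
    & #|E| = n.-1].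

Definition steiner_ok (E : {set {set 'I_n}}) (U W : {set 'I_n})
    (F : {set {set 'I_n}}) : bool :=
  [&& F \subset E, U \subset W, [forall f in F, f \subset W]
    & [forall x in W, forall y in W, connect (adj F) x y]].

(* Steiner distance S(U): minimum number of edges of such a subgraph
   (the default #|E| is attained by T itself when T is a tree). *)
Definition steiner (E : {set {set 'I_n}}) (U : {set 'I_n}) : nat :=
  \big[minn/#|E|]_(W : {set 'I_n})
    \big[minn/#|E|]_(F : {set {set 'I_n}} | steiner_ok E U W F) #|F|.

Definition compA (E : {set {set 'I_n}}) (e : {set 'I_n}) : {set 'I_n} :=
  match [pick u in e] with
  | Some u => [set x | connect (adj (E :\ e)) u x]
  | None => set0
  end.

Variable R : fieldType.

Definition avec (E : {set {set 'I_n}}) (e : {set 'I_n}) : 'cV[R]_n :=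
  \col_i (i \in compA E e)%:R.

Definition avec' (E : {set {set 'I_n}}) (e : {set 'I_n}) : 'cV[R]_n :=
  avec E e - (#|compA E e|%:R / n%:R) *: const_mx 1.

Definition PT (E : {set {set 'I_n}}) : 'M[R]_(#|E|, n) :=
  \matrix_(r < #|E|, i < n) avec' E (enum_val r) i 0.

Definition Hn (c : 'cV[R]_n) : Prop := \sum_(i < n) c i 0 = 0.

End Defs.

Definition hform (R : fieldType) (k m : nat)
    (H : {ffun 'I_k -> 'I_m} -> R) (x : 'I_k -> 'cV[R]_m) : R :=
  \sum_(i : {ffun 'I_k -> 'I_m}) H i * \prod_(j < k) x j (i j) 0.

Definition steiner_hyper (R : fieldType) (n k : nat) (E : {set {set 'I_n}})
    : {ffun 'I_k -> 'I_n} -> R :=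
  fun i => (steiner E [set i j | j : 'I_k])%:R.

Definition id_hyper (R : fieldType) (k m : nat) : {ffun 'I_k -> 'I_m} -> R :=
  fun i => ([forall j, forall j', i j == i j'])%:R.

(* Main.v *)
Require Import Defs.
From HB Require Import structures.
From mathcomp Require Import all_boot all_order all_algebra.
From mathcomp Require Import ring.
Import Order.TTheory GRing.Theory Num.Theory.
Set Implicit Arguments. Unset Strict Implicit. Unset Printing Implicit Defensive.

Section Graph.
Variable n : nat.
Implicit Types (F E : {set {set 'I_n}}) (x y z a b : 'I_n).

Lemma adj_sym F : symmetric (adj F).
Proof. by move=> x y; rewrite /adj eq_sym setUC. Qed.

Lemma adj_csym F : connect_sym (adj F).
Proof. exact/sym_connect_sym/adj_sym. Qed.

Lemma connect_mono F F' : F \subset F' -> forall x y, connect (adj F) x y -> connect (adj F') x y.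
Proof.
move=> sFF' x y; apply: connect_sub => u v /andP[uv uvF].
by apply: connect1; rewrite /adj uv (subsetP sFF').
Qed.

Lemma connect_set0 x y : connect (adj set0) x y -> x = y.
Proof.
case/connectP=> [[|z p]] /=; first by move=> _ ->.
by rewrite /adj in_set0 andbF.
Qed.

Lemma adjD1 E e x y : adj E x y -> [set x; y] != e -> adj (E :\ e) x y.
Proof. by case/andP=> xy xyE ne; rewrite /adj xy in_setD1 ne. Qed.

Lemma connect_split F f x y : connect (adj F) x y ->
  connect (adj (F :\ f)) x y \/
  exists a b, [/\ f = [set a; b], connect (adj (F :\ f)) x a & connect (adj (F :\ f)) b y].
Proof.
case/connectP=> p; elim: p x => [|z p IH] x /=; first by move=> _ ->; left.
case/andP=> xz pz ey.
have [H|[a [b [fab za bY]]]] := IH z pz ey.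
- case: (eqVneq [set x; z] f) => [exz|ne].
  + by right; exists x, z; split; [by rewrite exz | exact: connect0 | exact: H].
  + by left; apply: connect_trans H; apply: connect1; exact: adjD1.
- case: (eqVneq [set x; z] f) => [exz|ne].
  + have: x \in [set a; b] by rewrite -fab -exz set21.
    rewrite !inE => /orP[/eqP xa|/eqP xb].
    * by right; exists a, b; split=> //; rewrite xa; exact: connect0.
    * by left; rewrite xb.
  + right; exists a, b; split=> //. apply: connect_trans za; apply: connect1; exact: adjD1.
Qed.

Lemma comp_bound F : exists S : {set 'I_n},
  (n <= #|S| + #|F|)%N /\ {in S &, forall x y, connect (adj F) x y -> x = y}.
Proof.
have [m] := ubnP #|F|; elim: m F => // m IH F.
case: (set_0Vmem F) => [->|[f fF]] => Hm.
  exists setT; rewrite cards0 cardsT card_ord addn0; split=> // x y _ _; exact: connect_set0.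
have cF : #|F| = #|F :\ f|.+1 by rewrite (cardsD1 f F) fF.
have [|S' [cS' HS']] := IH (F :\ f); first by rewrite -ltnS -cF.
case: (set_0Vmem f) => [f0|[a af]].
  exists S'; split; first by rewrite cF addnS; apply: (leq_trans cS'); exact: leqnSn.
  move=> x y xS yS /(connect_split f) [|[a [b [fab _ _]]]]; first exact: HS'.
  by move: (set21 a b); rewrite -fab f0 inE.
pose X := [set s | connect (adj (F :\ f)) s a].
exists (S' :\: X); split.
  apply: (leq_trans cS'); rewrite cF addnS -addSn leq_add2r -(cardsID X S').
  rewrite addnC -addn1 leq_add2l.
  apply/card_le1_eqP => s t /setIP[sS sX] /setIP[tS tX].
  apply: HS' => //; move: sX tX; rewrite !inE => sa ta.
  by apply: (connect_trans ta); rewrite adj_csym.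
move=> s t /setDP[sS sX] /setDP[tS tX] /(connect_split f) [|[a' [b' [fab sa tb]]]].
  exact: HS'.
move: af; rewrite fab !inE => /orP[/eqP aa|/eqP ab].
  by move: sX; rewrite inE aa sa.
by move: tX; rewrite inE ab adj_csym tb.
Qed.


Lemma conn_card F : (0 < n)%N -> (forall x y, connect (adj F) x y) -> (n <= #|F|.+1)%N.
Proof.
move=> n0 Hc; have [S [cS HS]] := comp_bound F.
have S1 : (#|S| <= 1)%N.
  by apply/card_le1_eqP => s t sS tS; apply: HS => //; apply: Hc.
by apply: (leq_trans cS); rewrite -add1n leq_add2r.
Qed.

Lemma bridge E : is_tree E -> forall x z, adj E x z -> ~~ connect (adj (E :\ [set x; z])) x z.
Proof.
case=> H2 Hc HE x z xz; apply/negP => cxz.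
set e := [set x; z] in cxz.
have He : forall u v, u \in e -> v \in e -> connect (adj (E :\ e)) u v.
  move=> u v; rewrite !inE => /orP[]/eqP-> /orP[]/eqP->; rewrite ?connect0 //.
  by rewrite adj_csym.
have Hc' : forall u v, connect (adj (E :\ e)) u v.
  move=> u v; apply: (connect_sub _ (Hc u v)) => p q pq.
  case: (eqVneq [set p; q] e) => [epq|ne]; last by apply: connect1; apply: adjD1.
  by apply: He; rewrite -epq !inE eqxx ?orbT.
have eE : e \in E by case/andP: xz.
have n0 : (0 < n)%N by case: n x {xz cxz He Hc' H2 Hc HE e eE} => [[]|].
have := conn_card n0 Hc'.
move: HE; rewrite (cardsD1 e E) eE add1n => ->.
by case: n n0 => // m _; rewrite ltnn.
Qed.


Definition sepb E (U : {set 'I_n}) (e : {set 'I_n}) :=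
  [exists x in U, x \in Defs.compA E e] && [exists y in U, y \notin Defs.compA E e].
Definition sepset E U := [set e in E | sepb E U e].

Lemma compA_conn E e x y : x \in Defs.compA E e ->
  (y \in Defs.compA E e) = connect (adj (E :\ e)) x y.
Proof.
rewrite /Defs.compA; case: pickP => [u ue|]; last by rewrite inE.
rewrite !inE => ux; apply/idP/idP => H.
  by apply: connect_trans H; rewrite adj_csym.
exact: connect_trans ux H.
Qed.

Lemma sep_sub E U W F : steiner_ok E U W F -> sepset E U \subset F.
Proof.
case/and4P=> FE UW _ Hconn; apply/subsetP => e.
rewrite inE => /andP[eE /andP[/existsP[x /andP[xU xA]] /existsP[y /andP[yU yA]]]].
apply/negPn/negP => eF.
have FE' : F \subset E :\ e.
  apply/subsetP => f fF; rewrite in_setD1 (subsetP FE) // andbT.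
  by apply/eqP => fe; rewrite -fe fF in eF.
have := forall_inP Hconn x (subsetP UW x xU) => /forall_inP/(_ y (subsetP UW y yU)).
move/(connect_mono FE'); by rewrite -(compA_conn _ xA) (negbTE yA).
Qed.

Lemma steiner_ge E U : (#|sepset E U| <= steiner E U)%N.
Proof.
have sE : (#|sepset E U| <= #|E|)%N.
  by apply: subset_leq_card; apply/subsetP => e; rewrite inE => /andP[].
rewrite /steiner; apply: (big_ind (fun v => #|sepset E U| <= v)%N) => //; first by move=> ? ? ? ?; rewrite leq_min; apply/andP.
move=> W _; apply: (big_ind (fun v => #|sepset E U| <= v)%N) => //; first by move=> ? ? ? ?; rewrite leq_min; apply/andP.
move=> F ok; apply: subset_leq_card; exact: sep_sub ok.
Qed.

Lemma suffix_conn E p z (e : {set 'I_n}) x : path (adj E) z p -> x \notin z :: p -> x \in e ->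
  connect (adj (E :\ e)) z (last z p).
Proof.
elim: p z => [|z' p IH] z /=; first by move=> *; exact: connect0.
case/andP=> zz' pz'; rewrite in_cons negb_or => /andP[xz xn] xe.
apply: (connect_trans (connect1 _)) (IH z' pz' xn xe).
apply: adjD1 => //; apply/eqP => ee; move: xe; rewrite -ee !inE.
by move: xn; rewrite in_cons negb_or => /andP[xz' _]; rewrite (negbTE xz) (negbTE xz').
Qed.

Lemma path_sep E (U : {set 'I_n}) x0 y : is_tree E -> x0 \in U -> y \in U ->
  forall p x, uniq (x :: p) -> path (adj E) x p -> last x p = y ->
  (forall t (e : {set 'I_n}), t \in p -> t \in e -> connect (adj (E :\ e)) x0 x) ->
  path (adj (sepset E U)) x p.
Proof.
move=> HT x0U yU; elim=> [|z p IH] x //=.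
case/andP=> xn uzp /andP[xz pz] ly Hinv.
apply/andP; split; last first.
  apply: IH => // t e tp te.
  apply: (connect_trans (Hinv t e _ te)); first by rewrite inE tp orbT.
  apply: connect1; apply: adjD1 => //; apply/eqP => ee; move: te; rewrite -ee !inE.
  move: xn uzp; rewrite /= !inE negb_or => /andP[_ xp] /andP[zp _].
  by case/orP=> /eqP ?; subst; [rewrite tp in xp | rewrite tp in zp].
set e := [set x; z].
have c1 : connect (adj (E :\ e)) x0 x by apply: (Hinv z); rewrite !inE eqxx ?orbT.
have c2 : connect (adj (E :\ e)) z y by rewrite -ly; apply: suffix_conn pz xn _; rewrite !inE eqxx.
have br := bridge HT xz.
case/andP: (xz) => xz' eE.
rewrite /adj xz' inE eE /sepb /= /Defs.compA.
case: pickP => [u|]; last by move/(_ x); rewrite !inE eqxx.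
rewrite !inE => /orP[]/eqP->.
  apply/andP; split; apply/existsP.
    by exists x0; rewrite x0U inE; rewrite adj_csym.
  exists y; rewrite yU inE /=; apply/negP => xy.
  by move: br; rewrite (connect_trans xy) // adj_csym.
apply/andP; split; apply/existsP.
  by exists y; rewrite yU inE.
exists x0; rewrite x0U inE /=; apply/negP => zx0.
by move: br; rewrite adj_csym (connect_trans zx0 c1).
Qed.

Lemma restrict_conn F0 x0 : let W := [set z | connect (adj F0) x0 z] in
  forall p x, connect (adj F0) x0 x -> path (adj F0) x p ->
  connect (adj [set f in F0 | f \subset W]) x (last x p).
Proof.
move=> W; elim=> [|z p IH] x /=; first by move=> *; exact: connect0.
move=> x0x /andP[xz pz].
have x0z : connect (adj F0) x0 z by apply: (connect_trans x0x); exact: connect1.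
apply: (connect_trans (connect1 _)) (IH z x0z pz).
case/andP: xz => xz xzF; rewrite /adj xz inE xzF /=.
by apply/subsetP => v; rewrite !inE => /orP[]/eqP->.
Qed.

Lemma bigmin_le (I : finType) (P : pred I) (G : I -> nat) d j :
  P j -> (\big[minn/d]_(i | P i) G i <= G j)%N.
Proof.
move=> Pj; rewrite -big_filter.
have : j \in [seq i <- index_enum I | P i] by rewrite mem_filter Pj mem_index_enum.
elim: [seq i <- index_enum I | P i] => //= a s IH.
rewrite inE big_cons => /orP[/eqP<-|/IH H]; first exact: geq_minl.
exact: leq_trans (geq_minr _ _) H.
Qed.

Lemma steiner_eq E (U : {set 'I_n}) x0 : is_tree E -> x0 \in U -> steiner E U = #|sepset E U|.
Proof.
move=> HT x0U; apply/eqP; rewrite eqn_leq steiner_ge andbT.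
set F0 := sepset E U.
have key : forall y, y \in U -> connect (adj F0) x0 y.
  move=> y yU; have [_ Hc _] := HT.
  have /connectP[p pp ly] := Hc x0 y.
  move: yU; rewrite ly; case: (shortenP pp) => p' pp' up' _ yU.
  apply/connectP; exists p' => //.
  apply: (path_sep HT x0U yU up' pp' erefl) => t e _ _; exact: connect0.
set W := [set z | connect (adj F0) x0 z].
set F := [set f in F0 | f \subset W].
have inW : forall z, connect (adj F0) x0 z -> connect (adj F) x0 z.
  move=> z /connectP[p pp ->]; exact: (restrict_conn (connect0 _ _) pp).
have ok : steiner_ok E U W F.
  apply/and4P; split.
  - by apply/subsetP => f; rewrite /F /F0 !inE => /andP[/andP[]].
  - by apply/subsetP => y yU; rewrite inE key.
  - by apply/forall_inP => f; rewrite /F inE => /andP[].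
  - apply/forall_inP => x; rewrite inE => /inW x0x.
    apply/forall_inP => y; rewrite inE => /inW x0y.
    by apply: connect_trans x0y; rewrite adj_csym.
rewrite /steiner.
apply: (leq_trans (@bigmin_le _ xpredT _ _ W isT)).
apply: (leq_trans (bigmin_le _ _ ok)).
by apply: subset_leq_card; apply/subsetP => f; rewrite /F inE => /andP[].
Qed.

End Graph.

Local Open Scope ring_scope.

Section Alg.
Variable R : realFieldType.

Lemma prod_ind (I : finType) (b : I -> bool) :
  \prod_i ((b i)%:R : R) = ([forall i, b i])%:R.
Proof.
case: (boolP [forall i, b i]) => [/forallP H|/forallPn [j nbj]].
  by rewrite big1 // => i _; rewrite H.
by rewrite (bigD1 j) //= (negbTE nbj) mul0r.
Qed.

Lemma sum_delta (m : nat) (f : 'I_m -> R) r : \sum_s (s == r)%:R * f s = f r.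
Proof.
rewrite (bigD1 r) //= eqxx mul1r big1 ?addr0 // => s /negbTE ->; by rewrite mul0r.
Qed.

Lemma all_eq_sum (k m : nat) (j0 : 'I_k) (i : 'I_k -> 'I_m) :
  \sum_(r < m) ([forall j, i j == r])%:R = ([forall j, forall j', i j == i j'])%:R :> R.
Proof.
case: (boolP [forall j, forall j', i j == i j']) => [/forallP H | H].
  rewrite (bigD1 (i j0)) //=.
  have -> : [forall j, i j == i j0] by apply/forallP=> j; exact: (forallP (H j) j0).
  rewrite big1 ?addr0 // => r rne; case: forallP => // Hr.
  by rewrite (eqP (Hr j0)) eqxx in rne.
rewrite big1 // => r _; case: (boolP [forall j, i j == r]) => // /forallP Hr.
case/negP: H; apply/forallP => j; apply/forallP => j'.
by rewrite (eqP (Hr j)) (eqP (Hr j')).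
Qed.

Lemma card_sep_sum (n k : nat) (E : {set {set 'I_n}}) (i : {ffun 'I_k -> 'I_n}) (j0 : 'I_k) :
  (#|sepset E [set i j | j : 'I_k]|)%:R =
  \sum_(e in E) (1 - \prod_j ((i j \in Defs.compA E e)%:R : R)
                   - \prod_j ((i j \notin Defs.compA E e)%:R : R)).
Proof.
rewrite -sum1_card natr_sum big_mkcond /= [RHS]big_mkcond /=.
apply: eq_bigr => e _; rewrite inE; case: (e \in E) => //=.
rewrite !prod_ind /sepb.
set A := Defs.compA E e.
have ex1 : forall (P : pred 'I_n), [exists x in [set i j | j : 'I_k], P x] = [exists j, P (i j)].
  move=> P; apply/existsP/existsP => [[x /andP[/imsetP[j _ ->] Px]]|[j Pj]].
    by exists j.
  by exists (i j); rewrite Pj andbT; apply/imsetP; exists j.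
rewrite !ex1 -[[forall j, i j \in A]]negbK -[[forall j, i j \notin A]]negbK !negb_forall.
have : [exists j, i j \in A] || [exists j, ~~ (i j \in A)].
  by case: (boolP (i j0 \in A)) => H; apply/orP; [left|right]; apply/existsP; exists j0.
have -> : [exists x, ~~ (i x \notin A)] = [exists x, i x \in A].
  by apply: eq_existsb => x; rewrite negbK.
rewrite negbK.
case: [exists j, i j \in A]; case: [exists j, ~~ (i j \in A)] => //= _;
  rewrite ?mulr0n ?mulr1n; ring.
Qed.

End Alg.

Unset Implicit Arguments.
Local Open Scope ring_scope.

Theorem mainTheorem6 (R : realFieldType) (n k : nat) (E : {set {set 'I_n}})
    (c : 'I_k -> 'cV[R]_n) :
  (2 <= n)%N -> is_tree E -> (2 <= k)%N -> ~~ odd k ->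
  (forall j, Hn (c j)) ->
  hform (@steiner_hyper R n k E) c
    = hform (fun i => -2 * @id_hyper R k #|E| i) (fun j => PT R E *m c j)
  /\ hform (@steiner_hyper R n k E) c
    = -2 * \sum_(e in E) \prod_(j < k) ((avec' R E e)^T *m c j) 0 0.
Proof.
move=> n2 HT k2 kev Hc.
have k0 : (0 < k)%N by apply: ltnW.
pose j0 := Ordinal k0.
pose A e := Defs.compA E e.
pose al (e : {set 'I_n}) j := \sum_x ((x \in A e)%:R * c j x 0) : R.
have Hav : forall e j, ((avec' R E e)^T *m c j) 0 0 = al e j.
  move=> e j; rewrite !mxE.
  under eq_bigr => x _ do rewrite !mxE mulr1 mulrBl.
  by rewrite sumrB -mulr_sumr Hc mulr0 subr0.
have H2 : hform (@steiner_hyper R n k E) c = -2 * \sum_(e in E) \prod_j al e j.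
  rewrite /hform /steiner_hyper.
  have Hs : forall i : {ffun 'I_k -> 'I_n}, ((steiner E [set i j | j : 'I_k])%:R : R) =
      \sum_(e in E) (1 - \prod_j ((i j \in A e)%:R : R) - \prod_j ((i j \notin A e)%:R : R)).
    move=> i; rewrite (@steiner_eq _ E _ (i j0) HT); last by apply/imsetP; exists j0.
    exact: card_sep_sum.
  under eq_bigr => i _ do rewrite Hs mulr_suml.
  rewrite exchange_big /= mulr_sumr; apply: eq_bigr => e _.
  under eq_bigr => i _ do rewrite !mulrBl mul1r.
  rewrite !sumrB.
  have S0 : \sum_(i : {ffun 'I_k -> 'I_n}) \prod_j c j (i j) 0 = 0.
    transitivity (\prod_j \sum_x c j x 0); first by rewrite bigA_distr_bigA.
    by rewrite (bigD1 j0) //= Hc mul0r.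
  have S1 : forall (b : 'I_n -> bool),
      \sum_(i : {ffun 'I_k -> 'I_n}) (\prod_j ((b (i j))%:R : R)) * \prod_j c j (i j) 0
      = \prod_j \sum_x (b x)%:R * c j x 0.
    move=> b; transitivity (\sum_(i : {ffun 'I_k -> 'I_n}) \prod_j ((b (i j))%:R * c j (i j) 0)).
      by apply: eq_bigr => i _; rewrite big_split.
    by rewrite bigA_distr_bigA.
  have nb : forall b : bool, ((~~ b)%:R : R) = 1 - b%:R by case; rewrite ?subr0 ?subrr.
  rewrite S0 (S1 (fun x => x \in A e)) (S1 (fun x => x \notin A e)).
  have Hneg : forall j, \sum_x ((x \notin A e)%:R : R) * c j x 0 = - al e j.
    move=> j; under eq_bigr => x _ do rewrite nb mulrBl mul1r.
    by rewrite sumrB Hc sub0r.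
  under [X in _ - _ - X]eq_bigr => j _ do rewrite Hneg.
  rewrite prodrN card_ord -signr_odd (negbTE kev) expr0 mul1r.
  rewrite /al; ring.
have H1 : hform (fun i => -2 * @id_hyper R k #|E| i) (fun j => PT R E *m c j)
    = -2 * \sum_(e in E) \prod_j al e j.
  rewrite /hform /id_hyper.
  have Hy : forall j r, (PT R E *m c j) r 0 = al (enum_val r) j.
    by move=> j r; rewrite -Hav !mxE; apply: eq_bigr => x _; rewrite !mxE.
  under eq_bigr => i _ do rewrite -mulrA.
  rewrite -mulr_sumr; congr (_ * _).
  transitivity (\sum_(r < #|E|) \prod_j (PT R E *m c j) r 0).
    transitivity (\sum_(i : {ffun 'I_k -> 'I_#|E|}) \sum_(r < #|E|)
                    \prod_j ((i j == r)%:R * (PT R E *m c j) r 0)).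
      apply: eq_bigr => i _.
      rewrite -(all_eq_sum _ j0) mulr_suml; apply: eq_bigr => r _.
      have -> : \prod_j ((i j == r)%:R * (PT R E *m c j) r 0) =
                \prod_j ((i j == r)%:R * (PT R E *m c j) (i j) 0).
        by apply: eq_bigr => j _; case: eqP => [->|]; rewrite ?mul0r.
      by rewrite big_split /= prod_ind.
    rewrite exchange_big /=; apply: eq_bigr => r _.
    transitivity (\prod_j \sum_s ((s == r)%:R * (PT R E *m c j) r 0)).
      by rewrite bigA_distr_bigA.
    apply: eq_bigr => j _; exact: (sum_delta (fun _ => (PT R E *m c j) r 0) r).
  rewrite [RHS]big_enum_val /=; apply: eq_bigr => r _; apply: eq_bigr => j _; exact: Hy.
rewrite H1 H2; split => //.
by congr (_ * _); apply: eq_bigr => e _; apply: eq_bigr => j _; rewrite Hav.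
Qed.
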